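(* Let $X=(X_1,\dots,X_k)$ be a $k$-good random valuation and let $0<\lambda_1,\dots,\lambda_k\le1$. Let $\mathcal{M}_{\lambda_1,\dots,\lambda_k}$ be the set of all IC and IR mechanisms $\mu=(q,s)$ with $q_i(x)\in[0,\lambda_i]$ for every $x\in\mathbb{R}_+^k$ and $i=1,\dots,k$. Then \[ \textsc{Rev}(X_1,\dots,X_k)=\sup_{\mu\in\mathcal{M}_{\lambda_1,\dots,\lambda_k}}R(\mu;\tilde X_1,\dots,\tilde X_k),\qquad\text{where }\tilde X_i:=X_i/\lambda_i . \]
   Context: A $k$-good random valuation is a random vector in $\mathbb{R}_+^k$. A mechanism is a pair $\mu=(q,s)$ of Borel functions $q=(q_1,\dots,q_k):\mathbb{R}_+^k\to[0,1]^k$, $s:\mathbb{R}_+^k\to\mathbb{R}$ (for members of $\mathcal{M}_{\lambda_1,\dots,\lambda_k}$, $q$ takes values in $\prod_i[0,\lambda_i]$), with buyer payoff $b(x)=q(x)\cdot x-s(x)$; IR means $b(x)\ge0$ for all $x$; IC means $b(x)\ge q(\tilde x)\cdot x-s(\tilde x)$ for all $x,\tilde x$. $R(\mu;X)=\mathbb{E}[s(X)]$ and $\textsc{Rev}(X)$ is the supremum of $R(\mu;X)$ over all IC and IR mechanisms (with $q$ valued in $[0,1]^k$). *)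

(* Defs.v *)
From HB Require Import structures.
From mathcomp Require Import all_boot all_order all_algebra.
From mathcomp Require Import all_classical all_reals all_analysis.
Set Implicit Arguments. Unset Strict Implicit. Unset Printing Implicit Defensive.
Import Order.TTheory GRing.Theory Num.Theory.
Import numFieldNormedType.Exports.
Local Open Scope classical_set_scope.
Local Open Scope ring_scope.

(* Points of R^k are row vectors 'rV[R]_k; coordinate i of x is x 0 i. *)

Definition borelV (R : realType) (k : nat) : set (set 'rV[R]_k) :=
  <<s [set U : set 'rV[R]_k | open U] >>.

Definition borel_fun (R : realType) (k : nat) (f : 'rV[R]_k -> R) : Prop :=
  forall B : set R, measurable B -> @borelV R k (f @^-1` B).

Definition nonnegV (R : realType) (k : nat) (x : 'rV[R]_k) : Prop :=
  forall i : 'I_k, 0 <= x 0 i.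

Definition good_valuation (R : realType) (d : measure_display)
    (T : measurableType d) (k : nat) (X : T -> 'rV[R]_k) : Prop :=
  (forall A, @borelV R k A -> measurable (X @^-1` A)) /\
  (forall w, nonnegV (X w)).

(* buyer payoff b(x) = q(x).x - s(x) when reporting xt while true value x *)
Definition payoff (R : realType) (k : nat) (q : 'rV[R]_k -> 'rV[R]_k)
    (s : 'rV[R]_k -> R) (x xt : 'rV[R]_k) : R :=
  \sum_(i < k) q xt 0 i * x 0 i - s xt.

Definition IR (R : realType) (k : nat) (q : 'rV[R]_k -> 'rV[R]_k)
    (s : 'rV[R]_k -> R) : Prop :=
  forall x, nonnegV x -> 0 <= payoff q s x x.

Definition IC (R : realType) (k : nat) (q : 'rV[R]_k -> 'rV[R]_k)
    (s : 'rV[R]_k -> R) : Prop :=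
  forall x xt, nonnegV x -> nonnegV xt -> payoff q s x xt <= payoff q s x x.

Definition mech_in (R : realType) (k : nat) (lam : 'I_k -> R)
    (q : 'rV[R]_k -> 'rV[R]_k) (s : 'rV[R]_k -> R) : Prop :=
  (forall i : 'I_k, borel_fun (fun x => q x 0 i)) /\ borel_fun s /\
  (forall x, nonnegV x -> forall i, 0 <= q x 0 i <= lam i) /\
  IC q s /\ IR q s.

Definition revenue (R : realType) (d : measure_display) (T : measurableType d)
    (P : probability T R) (k : nat) (s : 'rV[R]_k -> R) (X : T -> 'rV[R]_k)
    : \bar R :=
  (\int[P]_w (s (X w))%:E)%E.

Definition sup_rev (R : realType) (d : measure_display) (T : measurableType d)
    (P : probability T R) (k : nat) (lam : 'I_k -> R) (X : T -> 'rV[R]_k)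
    : \bar R :=
  ereal_sup [set r | exists q s, mech_in lam q s /\ r = revenue P s X].

Definition Rev (R : realType) (d : measure_display) (T : measurableType d)
    (P : probability T R) (k : nat) (X : T -> 'rV[R]_k) : \bar R :=
  sup_rev P (fun _ => 1) X.

(* Main.v *)
Require Import Defs.
From HB Require Import structures.
From mathcomp Require Import all_boot all_order all_algebra.
From mathcomp Require Import all_classical all_reals all_analysis.
Import Order.TTheory GRing.Theory Num.Theory.
Import numFieldNormedType.Exports.
Local Open Scope classical_set_scope.
Local Open Scope ring_scope.

Section S.
Variables (R : realType) (k : nat).

Definition scale (c : 'I_k -> R) (x : 'rV[R]_k) : 'rV[R]_k :=
  \row_(i < k) (x 0 i * c i).

Lemma scale_continuous (c : 'I_k -> R) : (forall i, 0 < c i) ->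
  continuous (scale c).
Proof.
move=> cpos u A /nbhs_ballP[e /= e0 eA].
set M := 1 + \sum_(i < k) c i.
have cM i : c i <= M.
  rewrite /M (bigD1 i) //= addrCA lerDl.
  apply: addr_ge0 => //; apply: sumr_ge0 => j _; exact: ltW.
have M0 : 0 < M by apply: (lt_le_trans ltr01); rewrite /M lerDl sumr_ge0 // => j _; exact: ltW.
apply/nbhs_ballP; exists (e / M) => /=; first by rewrite divr_gt0.
move=> v [_ uv]; apply: eA; split => // i j.
have := uv i j; rewrite /ball /= !mxE => h.
rewrite -mulrBl normrM (gtr0_norm (cpos j)).
apply: (le_lt_trans (y := `|u i j - v i j| * M)).
  by rewrite [i]ord1; apply: ler_wpM2l.
by rewrite -ltr_pdivlMr.
Qed.

Lemma borelV_preimage (g : 'rV[R]_k -> 'rV[R]_k) : continuous g ->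
  forall A, borelV A -> borelV (g @^-1` A).
Proof.
move=> cg A hA; apply: (hA [set A | borelV (g @^-1` A)]); split.
- split.
  + rewrite /= preimage_set0; exact: sigma_algebra0.
  + move=> B hB /=.
    have -> : g @^-1` (setT `\` B) = setT `\` (g @^-1` B) by [].
    by case: (@smallest_sigma_algebra _ setT [set U : set 'rV[R]_k | open U]) => _ + _; apply.
  + move=> F hF /=; rewrite preimage_bigcup.
    by case: (@smallest_sigma_algebra _ setT [set U : set 'rV[R]_k | open U]) => _ _; apply.
- move=> U oU /=; apply: sub_sigma_algebra; exact: open_comp.
Qed.


Lemma scale_nonneg c x : (forall i, 0 < c i) -> nonnegV x -> nonnegV (scale c x).
Proof. by move=> cp hx i; rewrite /scale mxE mulr_ge0 // ltW. Qed.

Lemma mech_scale (L L' c : 'I_k -> R) q s : (forall i, 0 < c i) ->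
  (forall i, L' i = L i * c i) -> mech_in L q s ->
  mech_in L' (fun y => \row_i (q (scale c y) 0 i * c i)) (fun y => s (scale c y)).
Proof.
move=> cp hL [bq [bs [bd [ic ir]]]].
have hpay y yt : payoff (fun y => \row_i (q (scale c y) 0 i * c i)) (fun y => s (scale c y)) y yt
   = payoff q s (scale c y) (scale c yt).
  rewrite /payoff; congr (_ - _); apply: eq_bigr => i _; rewrite !mxE.
  by rewrite mulrAC mulrA.
have bsc := @borelV_preimage (scale c) (scale_continuous c cp).
split; [|split; [|split; [|split]]].
- move=> i B mB.
  have -> : (fun x => (\row_i0 (q (scale c x) 0 i0 * c i0)) 0 i) @^-1` B =
     scale c @^-1` ((fun x => q x 0 i) @^-1` ((fun r => r * c i) @^-1` B)).
    by apply/seteqP; split => x /=; rewrite mxE.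
  apply: bsc; apply: bq.
  have := @measurable_realfun.mulrr_measurable R setT (c i) measurableT B mB.
  by rewrite setTI.
- move=> B mB; apply: (bsc (s @^-1` B)); exact: bs.
- move=> x hx i; rewrite mxE hL.
  have /andP[h1 h2] := bd _ (scale_nonneg _ _ cp hx) i; apply/andP; split.
    by apply: mulr_ge0 => //; apply: ltW.
  by rewrite ler_pM2r.
- move=> x xt hx hxt; rewrite !hpay; apply: ic; exact: scale_nonneg.
- move=> x hx; rewrite hpay; apply: ir; exact: scale_nonneg.
Qed.

End S.
Arguments scale {R k}.
Arguments mech_scale {R k}.

Theorem lemma1 (R : realType) (d : measure_display) (T : measurableType d)
    (P : probability T R) (k : nat) (X : T -> 'rV[R]_k) (lam : 'I_k -> R) :
  good_valuation X ->
  (forall i, 0 < lam i <= 1) ->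
  Rev P X = sup_rev P lam (fun w => \row_(i < k) (X w 0 i / lam i)).
Proof.
move=> _ hl.
have lp i : 0 < lam i by case/andP: (hl i).
have lip i : 0 < (lam i)^-1 by rewrite invr_gt0.
rewrite /Rev /sup_rev; congr ereal_sup; apply/seteqP; split => r /=.
- move=> [q [s [hm ->]]].
  exists (fun y => \row_i (q (scale lam y) 0 i * lam i)), (fun y => s (scale lam y)).
  split; first by apply: mech_scale hm => // i; rewrite mul1r.
  rewrite /revenue; congr (integral _ _ _); apply/funext => w; congr (_%:E); congr s.
  apply/rowP => i; rewrite !mxE divfK //; exact: lt0r_neq0.
- move=> [q [s [hm ->]]].
  exists (fun y => \row_i (q (scale (fun i => (lam i)^-1) y) 0 i * (lam i)^-1)),
    (fun y => s (scale (fun i => (lam i)^-1) y)).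
  split; first by apply: mech_scale hm => // i; rewrite divff // lt0r_neq0.
  by [].
Qed.
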